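(* Consider DODA in the multi-agent setting of the context. Let the maximum delay be bounded by $\tau$, assume that for every agent $i$ and time $t$, $\mathcal S_t\subset\mathcal R^i_t$, and that the feedback of time step $t$ is the whole vector field $V_t=\nabla f_t$, which can be evaluated anywhere without delay. Suppose each $V_t$ is $L$-Lipschitz and that $\|V_t(x)\|\le G$, $\|\tilde V_t(x)\|\le G$ for all $t$ and $x$, where $\tilde V_t=V_s$ for some $s\in\mathcal S_t$. Let $D_t=\sum_{s\in\mathcal S_t}\|V_s(x_s)-\tilde V_s(x_s)\|^2$. Then for any $p$ with $\|p-x_1\|\le r$, running DODA with $\tilde g_{t+1/2}=\tilde V_t(x_t)$, \[\gamma_t=\min\Big(\frac{r\sqrt{4\tau+1}}{2\sqrt{D_t+4G^2(\tau+1)}},\ \frac{1}{\sqrt2L}\Big),\qquad \eta_t=\min\Big(\frac{r}{2\sqrt{(4\tau+1)(D_t+4G^2(3\tau+1))}},\ \frac{1}{\sqrt2L(4\tau+1)}\Big)\] guarantees \[R_T(p)\le\max\Big(\sqrt2r^2L(4\tau+1),\ 2r\sqrt{(4\tau+1)\big(V_T+4G^2(3\tau+1)\big)}\Big),\] where $V_T=\sum_{t=1}^T\|V_t(x_t)-\tilde V_t(x_t)\|^2$.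
   Context: Unconstrained Euclidean setting: $\mathcal V$ finite-dimensional Euclidean space; losses $f_t$ convex and differentiable. Several agents; at each round $t=1,\dots,T$ one agent $i(t)$ is active. $\mathcal S^i_t\subset\{1,\dots,t-1\}$: timestamps of feedback available to agent $i$ at time $t$, nondecreasing in $t$; $\mathcal S_t=\mathcal S^{i(t)}_t$. DODA: given $x_1$, $x_t=x_1-\eta_t\sum_{s\in\mathcal S_t}g_{s+1/2}$, $x_{t+1/2}=x_t-\gamma_t\tilde g_{t+1/2}$; the active agent plays $x_{t+1/2}$, and $g_{t+1/2}=V_t(x_{t+1/2})$. Regret: $R_T(p)=\sum_{t=1}^Tf_t(x_{t+1/2})-\sum_{t=1}^Tf_t(p)$. Maximum delay bounded by $\tau$: $\{1,\dots,t-\tau-1\}\subset\mathcal S_t$. Per-agent arrival order: for each agent $i$, $\sigma_i$ is a permutation of $\{1,\dots,T\}$ listing the order in which agent $i$ receives the feedback of time steps $1,\dots,T$, consistent with availability ($\mathcal S^i_t=\{\sigma_i(1),\dots,\sigma_i(|\mathcal S^i_t|)\}$); $\mathcal R^i_t=\{\sigma_i(1),\dots,\sigma_i(\sigma_i^{-1}(t)-1)\}$ is the set of timestamps of feedback received by $i$ before that of time $t$. *)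

(* Defs.v *)
From HB Require Import structures.
From mathcomp Require Import all_boot all_order all_algebra.
From mathcomp Require Import all_classical all_reals all_analysis.
Set Implicit Arguments. Unset Strict Implicit. Unset Printing Implicit Defensive.
Import Order.TTheory GRing.Theory Num.Theory.
Import numFieldNormedType.Exports.
Local Open Scope ring_scope.

Section Defs.
Variables (R : realType) (n : nat).

Definition dotv (u v : 'rV[R]_n) : R := \sum_(i < n) u 0 i * v 0 i.
Definition enorm (u : 'rV[R]_n) : R := Num.sqrt (dotv u u).

Definition convex_fun (f : 'rV[R]_n -> R) : Prop :=
  forall (x y : 'rV[R]_n) (l : R), 0 <= l <= 1 ->
    f (l *: x + (1 - l) *: y) <= l * f x + (1 - l) * f y.

Definition is_gradient (f : 'rV[R]_n -> R) (V : 'rV[R]_n -> 'rV[R]_n) : Prop :=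
  forall x, differentiable f x /\ forall h, 'd f x h = dotv (V x) h.

End Defs.

(* R^i_t : s is received by agent a before the feedback of time t,
   i.e. sigma_a^{-1}(s) < sigma_a^{-1}(t) (sigma_a a permutation of {1..T}). *)
Definition arrived_before (A : Type) (T : nat) (sigma : A -> nat -> nat)
  (a : A) (s t : nat) : Prop :=
  exists k j, (1 <= k)%N /\ (k < j)%N /\ (j <= T)%N /\ sigma a k = s /\ sigma a j = t.

(* Main.v *)
Require Import Defs.
From HB Require Import structures.
From mathcomp Require Import all_boot all_order all_algebra.
From mathcomp Require Import all_classical all_reals all_analysis.
From mathcomp Require Import lra ring zify.
Import Order.TTheory GRing.Theory Num.Theory.
Import numFieldNormedType.Exports.
Local Open Scope ring_scope.

Module Helpers.
Set Implicit Arguments. Unset Strict Implicit. Unset Printing Implicit Defensive.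

Section ConvSec.
Local Open Scope classical_set_scope.
Lemma conv_grad (R : realType) (n : nat) (f : 'rV[R]_n -> R) (V : 'rV[R]_n -> 'rV[R]_n) y p :
  convex_fun f -> is_gradient f V -> f y - f p <= dotv (V y) (y - p).
Proof.
move=> cf gf; have [df dfe] := gf y.
set v := p - y.
have dv : derivable f y v by exact: diff_derivable.
have E : 'D_v f y = dotv (V y) v by rewrite deriveE // dfe.
suff : 'D_v f y <= f p - f y.
  rewrite E => H.
  have -> : y - p = - v by rewrite /v opprB.
  suff -> : dotv (V y) (- v) = - dotv (V y) v by lra.
  by rewrite /dotv -sumrN; apply: eq_bigr => i _; rewrite mxE mulrN.
apply: (@cvgr_to_le _ (0^'+) _ _ (fun h : R => h^-1 *: ((f \o shift y) (h *: v) - f y))).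
  apply: cvg_trans; last exact: dv.
  apply: cvg_app; apply: within_subset => u /= u0; exact: lt0r_neq0.
near=> h.
have h0 : 0 < h by near: h; exact: nbhs_right_gt.
have h1 : h <= 1 by near: h; exact: nbhs_right_le.
rewrite /= /v.
have -> : h *: (p - y) + y = h *: p + (1 - h) *: y by rewrite scalerBr scalerBl scale1r [RHS]addrA [LHS]addrAC.
have := cf p y h; rewrite h1 ltW //= => /(_ isT) H.
rewrite -[X in _ <= X](mulKf (lt0r_neq0 h0)) /GRing.scale /=.
rewrite ler_pM2l ?invr_gt0 //; lra.
Unshelve. all: by end_near.
Qed.
End ConvSec.


Section Dot.
Variables (R : realType) (n : nat).
Implicit Types u v w : 'rV[R]_n.
Local Notation N2 u := (dotv u u).

Lemma dotvC u v : dotv u v = dotv v u.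
Proof. by apply: eq_bigr => i _; rewrite mulrC. Qed.
Lemma dotvDl u v w : dotv (u + v) w = dotv u w + dotv v w.
Proof. by rewrite /dotv -big_split; apply: eq_bigr => i _; rewrite mxE mulrDl. Qed.
Lemma dotvDr u v w : dotv w (u + v) = dotv w u + dotv w v.
Proof. by rewrite dotvC dotvDl !(dotvC w). Qed.
Lemma dotvZl k u v : dotv (k *: u) v = k * dotv u v.
Proof. by rewrite /dotv mulr_sumr; apply: eq_bigr => i _; rewrite mxE mulrA. Qed.
Lemma dotvZr k u v : dotv v (k *: u) = k * dotv v u.
Proof. by rewrite dotvC dotvZl dotvC. Qed.
Lemma dotvNl u v : dotv (- u) v = - dotv u v.
Proof. by rewrite -scaleN1r dotvZl mulN1r. Qed.
Lemma dotvNr u v : dotv v (- u) = - dotv v u.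
Proof. by rewrite dotvC dotvNl dotvC. Qed.
Lemma dotvBl u v w : dotv (u - v) w = dotv u w - dotv v w.
Proof. by rewrite dotvDl dotvNl. Qed.
Lemma dotvBr u v w : dotv w (u - v) = dotv w u - dotv w v.
Proof. by rewrite dotvDr dotvNr. Qed.
Lemma dotv0l v : dotv 0 v = 0.
Proof. by rewrite /dotv big1 // => i _; rewrite mxE mul0r. Qed.
Lemma dotv0r v : dotv v 0 = 0.
Proof. by rewrite dotvC dotv0l. Qed.
Lemma dotv_suml (I : Type) (r : seq I) (P : pred I) (F : I -> 'rV[R]_n) w :
  dotv (\sum_(i <- r | P i) F i) w = \sum_(i <- r | P i) dotv (F i) w.
Proof. exact: (big_morph (fun u => dotv u w) (fun u v => dotvDl u v w) (dotv0l w)). Qed.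
Lemma dotv_sumr (I : Type) (r : seq I) (P : pred I) (F : I -> 'rV[R]_n) w :
  dotv w (\sum_(i <- r | P i) F i) = \sum_(i <- r | P i) dotv w (F i).
Proof. rewrite dotvC dotv_suml; apply: eq_bigr => i _; exact: dotvC. Qed.
Lemma N2_ge0 u : 0 <= N2 u.
Proof. by apply: sumr_ge0 => i _; rewrite -expr2 sqr_ge0. Qed.
Lemma enorm_ge0 u : 0 <= enorm u.
Proof. exact: sqrtr_ge0. Qed.
Lemma enorm_sq u : enorm u ^+ 2 = N2 u.
Proof. by rewrite /enorm sqr_sqrtr // N2_ge0. Qed.
Lemma N2_le u G : enorm u <= G -> N2 u <= G ^+ 2.
Proof. move=> h; rewrite -enorm_sq; have := enorm_ge0 u; nra. Qed.
Lemma N2B u v : N2 (u - v) = N2 u - 2 * dotv u v + N2 v.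
Proof. rewrite !dotvBl !dotvBr (dotvC v u); ring. Qed.
Lemma N2D u v : N2 (u + v) = N2 u + 2 * dotv u v + N2 v.
Proof. rewrite !dotvDl !dotvDr (dotvC v u); ring. Qed.
Lemma amgm2 u v : 2 * dotv u v <= N2 u + N2 v.
Proof. have := N2_ge0 (u - v); rewrite N2B; lra. Qed.
Lemma amgm_l u v (l : R) : 0 < l -> dotv u v <= N2 u / (2 * l) + l / 2 * N2 v.
Proof.
move=> l0; have := N2_ge0 (u - l *: v); rewrite N2B dotvZr dotvZl dotvZr => h.
have e : N2 u / (2 * l) + l / 2 * N2 v - dotv u v = (N2 u - 2 * (l * dotv u v) + l * (l * N2 v)) / (2 * l).
  by field; lra.
rewrite -subr_ge0 e; apply: divr_ge0 => //; lra.
Qed.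
Lemma N2D_le u v : N2 (u + v) <= 2 * N2 u + 2 * N2 v.
Proof. have := N2_ge0 (u - v); rewrite N2B N2D; lra. Qed.
Lemma N2Z k u : N2 (k *: u) = k ^+ 2 * N2 u.
Proof. rewrite dotvZl dotvZr; ring. Qed.
Lemma N2_eq0 u v : N2 u <= 0 -> dotv u v = 0.
Proof.
move=> h; have h0 : N2 u = 0 by apply/le_anti; rewrite h N2_ge0.
have ui : forall i, u 0 i = 0.
  move=> i; move/eqP: h0; rewrite psumr_eq0 => [/allP /(_ i)|j _]; last by rewrite -expr2 sqr_ge0.
  by rewrite mem_index_enum => /(_ isT) /implyP /(_ isT); rewrite mulf_eq0 orbb => /eqP.
by rewrite /dotv big1 // => i _; rewrite ui mul0r.
Qed.
End Dot.


Section Prec.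
Variables (R : realType) (eta : nat -> R).
Definition prec (u t : nat) : bool := (eta t < eta u) || ((eta u == eta t) && (u < t)%N).

Lemma prec_irr u : prec u u = false.
Proof. by rewrite /prec ltxx ltnn andbF. Qed.
Lemma prec_asym u t : prec u t -> prec t u = false.
Proof.
rewrite /prec => /orP[h|/andP[/eqP e h]].
  by rewrite (lt_gtF h) (lt_eqF h).
by rewrite e ltxx eqxx /= ltnNge (ltnW h).
Qed.
Lemma prec_total u t : u != t -> prec u t || prec t u.
Proof.
move=> ne; rewrite /prec; case: (ltgtP (eta t) (eta u)) => //=.
by case: (ltngtP u t) => // e; rewrite e eqxx in ne.
Qed.
Lemma prec_trans a b c : prec a b -> prec b c -> prec a c.
Proof.
rewrite /prec => /orP[h1|/andP[/eqP e1 h1]] /orP[h2|/andP[/eqP e2 h2]].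
- by rewrite (lt_trans h2 h1).
- by rewrite -e2 h1.
- by rewrite e1 h2.
- by rewrite e1 e2 eqxx (ltn_trans h1 h2) orbT.
Qed.
Lemma prec_le u t : prec u t -> eta t <= eta u.
Proof. by rewrite /prec => /orP[/ltW //|/andP[/eqP -> _]]. Qed.

Lemma exists_max (U : seq nat) (A : pred nat) : has A U ->
  exists m, [/\ m \in U, A m & forall u, u \in U -> A u -> prec m u = false].
Proof.
elim: U => //= x s IH.
case Ax: (A x) => /=; last first.
  move=> hs; have [m' [m's Am' mx]] := IH hs.
  exists m'; split => //; first by rewrite inE m's orbT.
  by move=> u; rewrite inE => /orP[/eqP ->|us] Au; [rewrite Ax in Au|apply: mx].
move=> _; case hs: (has A s).
  have [m' [m's Am' mx]] := IH hs.
  case pm: (prec m' x).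
    exists x; split => //; first by rewrite inE eqxx.
    move=> u; rewrite inE => /orP[/eqP ->|us] Au; first exact: prec_irr.
    apply/negbTE/negP => pxu; by have := prec_trans pm pxu; rewrite mx.
  exists m'; split => //; first by rewrite inE m's orbT.
  by move=> u; rewrite inE => /orP[/eqP ->|us] Au //; apply: mx.
exists x; split => //; first by rewrite inE eqxx.
move=> u; rewrite inE => /orP[/eqP ->|us] Au; first exact: prec_irr.
by move/hasPn: hs => /(_ u us); rewrite Au.
Qed.
End Prec.


Section Abel.
Variables (R : realType) (n : nat) (eta : nat -> R) (g : nat -> 'rV[R]_n) (U : seq nat).
Hypothesis uU : uniq U.
Local Notation N2 u := (dotv u u).
Definition WA (A : pred nat) t := \sum_(u <- U | A u && prec eta u t) g u.

Lemma split_big (V : Type) (idx : V) (op : Monoid.com_law idx) (A : pred nat) m F :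
  m \in U -> A m ->
  \big[op/idx]_(t <- U | A t) F t = op (F m) (\big[op/idx]_(t <- U | A t && (t != m)) F t).
Proof.
move=> mU Am; rewrite -big_filter (bigD1_seq m) ?filter_uniq ?mem_filter ?Am //.
by rewrite big_filter_cond.
Qed.

Lemma abel k : forall (A : pred nat) (l : R), (count A U <= k)%N ->
  (forall t, t \in U -> A t -> l <= eta t) ->
  l * N2 (\sum_(t <- U | A t) g t) <=
  \sum_(t <- U | A t) eta t * (N2 (WA A t + g t) - N2 (WA A t)).
Proof.
elim: k => [|k IH] A l cA hl.
  have hA : ~~ has A U by rewrite has_count -leqNgt.
  by rewrite !big_hasC // dotv0l mulr0.
case hA: (has A U); last first.
  by rewrite !big_hasC ?hA // dotv0l mulr0.
have [m [mU Am mx]] := exists_max eta hA.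
set A' := fun t => A t && (t != m).
have pm : forall t, t \in U -> A' t -> prec eta t m.
  move=> t tU /andP[At tm]; have := prec_total eta tm; by rewrite (mx t tU At) orbF.
have cA' : (count A' U <= k)%N.
  move: cA; rewrite -!sum1_count (split_big _ _ mU Am) /= ; rewrite add1n ltnS.
  by apply: leq_trans; apply: eq_leq; apply: eq_bigl => t.
have IH' := IH A' (eta m) cA' (fun t tU At => prec_le (pm t tU At)).
have eW : forall t, t \in U -> A' t -> WA A t = WA A' t.
  move=> t tU At; rewrite /WA; apply: eq_bigl => u.
  case: (eqVneq u m) => [->|um]; last by rewrite /A' um andbT.
  by rewrite (prec_asym (pm t tU At)) !andbF.
have eWm : WA A m = \sum_(u <- U | A' u) g u.
  rewrite /WA [LHS]big_seq_cond [RHS]big_seq_cond; apply: eq_bigl => u.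
  case uU': (u \in U) => //=.
  case: (eqVneq u m) => [->|um]; first by rewrite /A' eqxx prec_irr !andbF.
  rewrite /A' um andbT; case Au: (A u) => //=; apply: pm => //; by rewrite /A' Au um.
rewrite (split_big _ _ mU Am) [X in _ <= X](split_big _ _ mU Am) /=.
rewrite -/A' eWm.
have -> : \sum_(t <- U | A' t) eta t * (N2 (WA A t + g t) - N2 (WA A t)) =
          \sum_(t <- U | A' t) eta t * (N2 (WA A' t + g t) - N2 (WA A' t)).
  by rewrite big_seq_cond [RHS]big_seq_cond; apply: eq_bigr => t /andP[tU At]; rewrite eW.
set H' := \sum_(u <- U | A' u) g u.
rewrite [g m + H']addrC.
have lm : l <= eta m by apply: hl.
have : l * N2 (H' + g m) <= eta m * N2 (H' + g m) by apply: ler_wpM2r => //; exact: N2_ge0.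
lra.
Qed.
End Abel.


Lemma window_count (c tau : nat) (s : seq nat) : uniq s ->
  (count (fun v => (v != c) && (v <= c + tau)%N && (c <= v + tau)%N) s <= 2 * tau)%N.
Proof.
move=> us; set P := fun v => _.
set w0 := iota (c - tau) (2 * tau).+1.
have sw : size (seq.filter (predC1 c) w0) = (2 * tau)%N.
  have := count_predC (pred1 c) w0; rewrite size_filter.
  have -> : count (pred1 c) w0 = 1%N.
    rewrite (count_uniq_mem c (iota_uniq _ _)) mem_iota; apply/eqP; rewrite eqb1; apply/andP; split; lia.
  by rewrite size_iota add1n => -[].
rewrite -size_filter -sw; apply: uniq_leq_size; first exact: filter_uniq.
move=> v; rewrite !mem_filter /P => /andP[/andP[/andP[vc h1] h2] _] /=.
rewrite vc /= mem_iota; apply/andP; split; lia.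
Qed.

Lemma adagrad (R : realType) (a : nat -> R) : (forall t, 0 <= a t) -> forall T,
  \sum_(1 <= t < T.+1) a t / Num.sqrt (\sum_(1 <= s < t.+1) a s)
    <= 2 * Num.sqrt (\sum_(1 <= s < T.+1) a s).
Proof.
move=> a0; elim => [|T IH]; first by rewrite !big_geq // sqrtr0 mulr0.
rewrite big_nat_recr //=.
set Y := \sum_(1 <= s < T.+1) a s.
have -> : \sum_(1 <= s < T.+2) a s = Y + a T.+1 by rewrite big_nat_recr.
have Y0 : 0 <= Y by apply: sumr_ge0 => i _.
have aT := a0 T.+1.
set X := Y + a T.+1.
have X0 : 0 <= X by rewrite /X; lra.
suff : a T.+1 / Num.sqrt X <= 2 * (Num.sqrt X - Num.sqrt Y) by lra.
have sX := sqrtr_ge0 X; have sY := sqrtr_ge0 Y.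
have eX := sqr_sqrtr X0; have eY := sqr_sqrtr Y0.
case: (eqVneq (Num.sqrt X) 0) => [sX0|sXn].
  rewrite sX0 invr0 mulr0.
  have : Num.sqrt Y <= Num.sqrt X by rewrite ler_sqrt //; rewrite /X; lra.
  lra.
have sXp : 0 < Num.sqrt X by rewrite lt_def sXn sX.
rewrite ler_pdivrMr //.
have e : a T.+1 = Num.sqrt X ^+ 2 - Num.sqrt Y ^+ 2 by rewrite eX eY /X; ring.
rewrite e; have : Num.sqrt Y <= Num.sqrt X by rewrite ler_sqrt //; rewrite /X; lra.
nra.
Qed.


Section Steps.
Variables (R : realType) (r L G : R) (tau : nat).
Hypotheses (r0 : 0 <= r) (L0 : 0 < L) (G0 : 0 < G).
Definition cc : R := 4 * tau%:R + 1.
Definition C1 : R := 4 * G ^+ 2 * (tau%:R + 1).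
Definition C3 : R := 4 * G ^+ 2 * (3 * tau%:R + 1).
Definition gamf (D : R) := Num.min (r * Num.sqrt cc / (2 * Num.sqrt (D + C1))) (1 / (Num.sqrt 2 * L)).
Definition etaf (D : R) := Num.min (r / (2 * Num.sqrt (cc * (D + C3)))) (1 / (Num.sqrt 2 * L * cc)).

Lemma cc_gt0 : 0 < cc. Proof. rewrite /cc; have := ler0n R tau; lra. Qed.
Lemma C1_gt0 : 0 < C1. Proof. rewrite /C1; have := ler0n R tau; have : 0 < G ^+ 2 by rewrite exprn_gt0. nra. Qed.
Lemma C3_gt0 : 0 < C3. Proof. rewrite /C3; have := ler0n R tau; have : 0 < G ^+ 2 by rewrite exprn_gt0. nra. Qed.
Lemma sqrt2_gt0 : 0 < Num.sqrt 2 :> R. Proof. by rewrite sqrtr_gt0. Qed.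

Lemma gam_ge0 D : 0 <= D -> 0 <= gamf D.
Proof.
move=> D0; rewrite le_min; apply/andP; split.
  apply: divr_ge0; last by rewrite mulr_ge0 // sqrtr_ge0.
  by rewrite mulr_ge0 // sqrtr_ge0.
by rewrite divr_ge0 // mulr_ge0 // ?sqrtr_ge0 ltW.
Qed.
Lemma eta_ge0 D : 0 <= D -> 0 <= etaf D.
Proof.
move=> D0; have := cc_gt0 => c0; rewrite le_min; apply/andP; split.
  by apply: divr_ge0; last by rewrite mulr_ge0 // sqrtr_ge0.
by rewrite divr_ge0 // !mulr_ge0 // ?sqrtr_ge0 ltW.
Qed.
Lemma s2E : Num.sqrt 2 ^+ 2 = 2 :> R. Proof. by rewrite sqr_sqrtr. Qed.

Lemma gam_leL D : 0 <= D -> 2 * L ^+ 2 * gamf D ^+ 2 <= 1.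
Proof.
move=> D0; have g0 := gam_ge0 D0.
have gb : gamf D <= 1 / (Num.sqrt 2 * L) by rewrite ge_min lexx orbT.
set b := 1 / _ in gb.
have s2p := sqrt2_gt0.
have eb : 2 * L ^+ 2 * b ^+ 2 = 1.
  rewrite /b expr_div_n exprMn s2E; field; exact: lt0r_neq0.
have : gamf D ^+ 2 <= b ^+ 2 by nra.
have : 0 <= L ^+ 2 by rewrite sqr_ge0.
nra.
Qed.

Lemma minl (x y : R) : Num.min x y <= x. Proof. by rewrite ge_min lexx. Qed.
Lemma minr (x y : R) : Num.min x y <= y. Proof. by rewrite ge_min lexx orbT. Qed.

Lemma div_anti (x p q : R) : 0 <= x -> 0 < q -> q <= p -> x / p <= x / q.
Proof.
move=> x0 q0 qp; apply: ler_wpM2l => //.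
by rewrite lef_pV2 // posrE; apply: lt_le_trans qp.
Qed.

Lemma eta_le_gam D D' : 0 <= D' -> D' + C1 <= D + C3 -> cc * etaf D <= gamf D'.
Proof.
move=> D'0 h; have c0 := cc_gt0; have C10 := C1_gt0.
have s2p := sqrt2_gt0.
rewrite le_min; apply/andP; split.
  apply: le_trans (ler_wpM2l (ltW c0) ((minl _ _))) _.
  have q0 : 0 < Num.sqrt (D' + C1) by rewrite sqrtr_gt0; lra.
  have qp : Num.sqrt (D' + C1) <= Num.sqrt (D + C3) by rewrite ler_sqrt //; lra.
  have sc : 0 < Num.sqrt cc by rewrite sqrtr_gt0.
  have e : cc * (r / (2 * Num.sqrt (cc * (D + C3)))) = r * Num.sqrt cc / (2 * Num.sqrt (D + C3)).
    rewrite sqrtrM ?(ltW c0) //.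
    have -> : cc = Num.sqrt cc ^+ 2 by rewrite sqr_sqrtr // ltW.
    rewrite sqrtr_sqr ger0_norm ?(ltW sc) //; field.
    apply/andP; split; first lra.
    by rewrite lt0r_neq0 //; apply: lt_le_trans qp.
  rewrite e; rewrite -!mulf_div ?mulr1 /=.
  apply: ler_wpM2l; first by rewrite divr_ge0.
  exact: div_anti (ltW sc) q0 qp.
apply: le_trans (ler_wpM2l (ltW c0) ((minr _ _))) _.
rewrite le_eqVlt; apply/orP; left; apply/eqP; field; by rewrite !lt0r_neq0.
Qed.

Lemma eta_anti D D' : 0 <= D -> D <= D' -> etaf D' <= etaf D.
Proof.
move=> D0 DD'; have c0 := cc_gt0; have C30 := C3_gt0.
apply: le_min2 => //; apply: div_anti => //.
  by rewrite mulr_gt0 // sqrtr_gt0 mulr_gt0 //; lra.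
by rewrite ler_wpM2l // ler_sqrt ?mulr_ge0 ?ler_wpM2l; lra.
Qed.

Lemma gam_le_A D A : 0 < A -> A <= D + C1 -> gamf D <= r * Num.sqrt cc / (2 * Num.sqrt A).
Proof.
move=> A0 AD; apply: le_trans (minl _ _) _; apply: div_anti.
- by rewrite mulr_ge0 // sqrtr_ge0.
- by rewrite mulr_gt0 // sqrtr_gt0.
- by rewrite ler_wpM2l // ler_sqrt //; lra.
Qed.

Lemma final_bound VT : 0 <= VT -> 0 < r ->
  0 < etaf VT /\ r ^+ 2 <= etaf VT * Num.max (Num.sqrt 2 * r ^+ 2 * L * cc)
                                           (2 * r * Num.sqrt (cc * (VT + C3))).
Proof.
move=> V0 rp; have c0 := cc_gt0; have C30 := C3_gt0; have s2p := sqrt2_gt0.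
have sp : 0 < Num.sqrt (cc * (VT + C3)) by rewrite sqrtr_gt0 mulr_gt0 //; lra.
rewrite /etaf; set a := r / _; set b := 1 / _.
have a0 : 0 < a by rewrite /a divr_gt0 // mulr_gt0.
have b0 : 0 < b by rewrite /b divr_gt0 // !mulr_gt0.
set B := Num.max _ _.
have B1 : Num.sqrt 2 * r ^+ 2 * L * cc <= B by rewrite le_max lexx.
have B2 : 2 * r * Num.sqrt (cc * (VT + C3)) <= B by rewrite le_max lexx orbT.
have [ab|ba] := leP a b.
  split => //.
  apply: le_trans (ler_wpM2l (ltW a0) B2).
  rewrite le_eqVlt; apply/orP; left; apply/eqP; rewrite /a; field.
  by rewrite lt0r_neq0.
split => //.
apply: le_trans (ler_wpM2l (ltW b0) B1).
rewrite le_eqVlt; apply/orP; left; apply/eqP; rewrite /b; field.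
by rewrite !lt0r_neq0.
Qed.
End Steps.


Lemma sum_constK (R : realType) (K : R) (P : pred nat) (U : seq nat) :
  \sum_(u <- U | P u) K = K * (count P U)%:R.
Proof. by rewrite -sum1_count natr_sum mulr_sumr; apply: eq_bigr => _ _; rewrite mulr1. Qed.

Lemma sum_constK_le (R : realType) (K : R) (P : pred nat) (U : seq nat) (m : nat) :
  0 <= K -> (count P U <= m)%N -> \sum_(u <- U | P u) K <= K * m%:R.
Proof. by move=> K0 cm; rewrite sum_constK ler_wpM2l // ler_nat. Qed.

Section Cross.
Variables (R : realType) (n : nat) (U : seq nat) (tau : nat).
Variables (Nb : nat -> nat -> bool) (e z : nat -> R) (g : nat -> 'rV[R]_n).
Hypothesis uU : uniq U.
Hypothesis hN : forall t u, Nb t u -> (u != t) && (u <= t + tau)%N && (t <= u + tau)%N.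
Hypothesis hez : forall t u, Nb t u -> e t <= z u.
Hypothesis he0 : forall t, 0 <= e t.
Hypothesis hz0 : forall t, 0 <= z t.
Local Notation N2 u := (dotv u u).

Lemma cross_bound :
  \sum_(t <- U) e t * dotv (g t) (\sum_(u <- U | Nb t u) g u) <=
  \sum_(t <- U) (tau%:R * e t + tau%:R * z t) * N2 (g t).
Proof.
have step1 : forall t, e t * dotv (g t) (\sum_(u <- U | Nb t u) g u) <=
    \sum_(u <- U | Nb t u) (e t * N2 (g t) / 2) + \sum_(u <- U | Nb t u) (z u * N2 (g u) / 2).
  move=> t; rewrite dotv_sumr mulr_sumr -big_split /=; apply: ler_sum => u Ntu.
  have := amgm2 (g t) (g u); have := N2_ge0 (g u); have := hez Ntu; have := he0 t.
  nra.
apply: le_trans (ler_sum _ (fun t _ => step1 t)) _.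
rewrite big_split /=.
have A : \sum_(t <- U) \sum_(u <- U | Nb t u) (e t * N2 (g t) / 2) <=
         \sum_(t <- U) tau%:R * e t * N2 (g t).
  apply: ler_sum => t _; apply: le_trans (sum_constK_le (m := (2 * tau)%N) _ _) _.
  - by apply: divr_ge0 => //; apply: mulr_ge0 => //; exact: N2_ge0.
  - apply: leq_trans (window_count t tau uU); apply: sub_count => u /= /hN.
    by [].
  - by rewrite natrM le_eqVlt; apply/orP; left; apply/eqP; field.
have B : \sum_(t <- U) \sum_(u <- U | Nb t u) (z u * N2 (g u) / 2) <=
         \sum_(u <- U) tau%:R * z u * N2 (g u).
  rewrite (eq_bigr (fun t => \sum_(u <- U) (if Nb t u then z u * N2 (g u) / 2 else 0)));
    last by move=> t _; rewrite big_mkcond.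
  rewrite exchange_big /=; apply: ler_sum => u _; rewrite -big_mkcond /=.
  apply: le_trans (sum_constK_le (m := (2 * tau)%N) _ _) _.
  - by apply: divr_ge0 => //; apply: mulr_ge0 => //; exact: N2_ge0.
  - apply: leq_trans (window_count u tau uU); apply: sub_count => t /= /hN.
    by move=> /andP[/andP[a b] c]; rewrite eq_sym a b c.
  - by rewrite natrM le_eqVlt; apply/orP; left; apply/eqP; field.
apply: le_trans (lerD A B) _; rewrite -big_split /=; apply: ler_sum => t _.
by rewrite le_eqVlt; apply/orP; left; apply/eqP; ring.
Qed.
End Cross.


Lemma sum_restrict (V : zmodType) (T t : nat) (P : pred nat) (F : nat -> V) :
  (forall u, P u -> (1 <= u < t)%N) -> (t <= T.+1)%N ->
  \sum_(1 <= u < t | P u) F u = \sum_(1 <= u < T.+1 | P u) F u.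
Proof.
move=> hP tT; case: (posnP t) => [t0|t0].
  rewrite big_geq ?t0 // big1 // => u /hP; rewrite t0; lia.
rewrite (big_cat_nat (n:=t) t0 tT) /= [X in _ + X]big_nat_cond [X in _ + X]big1 ?addr0 //.
by move=> u /andP[/andP[h1 h2] /hP]; lia.
Qed.

Lemma sum_sub_nat (R : realType) (F : nat -> R) m k (P Q : pred nat) :
  (forall i, (m <= i < k)%N -> P i -> Q i) -> (forall i, 0 <= F i) ->
  \sum_(m <= i < k | P i) F i <= \sum_(m <= i < k | Q i) F i.
Proof.
move=> hPQ F0; rewrite [leLHS]big_mkcond [leRHS]big_mkcond /=; apply: ler_sum_nat => i hi.
case Pi: (P i); first by rewrite (hPQ i hi Pi).
by case: (Q i).
Qed.

End Helpers.
Import Helpers.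
Unset Implicit Arguments.


Theorem proposition7 (R : realType) (n : nat) (A : Type) (T tau : nat)
  (act : nat -> A) (S : A -> nat -> pred nat) (sigma : A -> nat -> nat)
  (f : nat -> 'rV[R]_n -> R) (V Vt : nat -> 'rV[R]_n -> 'rV[R]_n)
  (L G r : R) (x1 p : 'rV[R]_n) (x xh : nat -> 'rV[R]_n) (gamma eta : nat -> R) :
  (* feedback sets: S a t is a subset of {1,..,t-1}, nondecreasing in t *)
  (forall a t, (1 <= t <= T)%N -> forall s, S a t s -> (1 <= s < t)%N) ->
  (forall a t t', (1 <= t)%N -> (t <= t' <= T)%N -> forall s, S a t s -> S a t' s) ->
  (* arrival orders: sigma a is a permutation of {1,..,T} *)
  (forall a k, (1 <= k <= T)%N -> (1 <= sigma a k <= T)%N) ->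
  (forall a k k', (1 <= k <= T)%N -> (1 <= k' <= T)%N -> sigma a k = sigma a k' -> k = k') ->
  (* consistency: S a t = {sigma a 1, .., sigma a |S a t|} *)
  (forall a t, (1 <= t <= T)%N -> exists m, (m <= T)%N /\
      forall s, S a t s <-> exists k, (1 <= k <= m)%N /\ sigma a k = s) ->
  (* maximum delay bounded by tau: {1,..,t-tau-1} included in S_t *)
  (forall t, (1 <= t <= T)%N -> forall s, (1 <= s)%N -> (s + tau < t)%N -> S (act t) t s) ->
  (* S_t included in R^i_t for every agent i and time t *)
  (forall a t, (1 <= t <= T)%N -> forall s, S (act t) t s -> arrived_before T sigma a s t) ->
  (* losses: convex, differentiable, V t = gradient of f t *)
  (forall t, (1 <= t <= T)%N -> convex_fun (f t) /\ is_gradient (f t) (V t)) ->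
  0 < L ->
  (forall t, (1 <= t <= T)%N -> forall y z, enorm (V t y - V t z) <= L * enorm (y - z)) ->
  (forall t, (1 <= t <= T)%N -> forall y, enorm (V t y) <= G /\ enorm (Vt t y) <= G) ->
  (* hint: Vt t = V s for some s in S_t (Vt t = 0 when S_t is empty) *)
  (forall t, (1 <= t <= T)%N ->
     (exists2 s, S (act t) t s & Vt t = V s) \/
     ((forall s, ~~ S (act t) t s) /\ Vt t = (fun _ => 0))) ->
  enorm (p - x1) <= r ->
  (* DODA iterates with the given step sizes *)
  (forall t, (1 <= t <= T)%N ->
     x t = x1 - eta t *: \sum_(1 <= s < t | S (act t) t s) V s (xh s)) ->
  (forall t, (1 <= t <= T)%N -> xh t = x t - gamma t *: Vt t (x t)) ->
  (forall t, (1 <= t <= T)%N ->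
     let D := \sum_(1 <= s < t | S (act t) t s) enorm (V s (x s) - Vt s (x s)) ^+ 2 in
     gamma t = Num.min
       (r * Num.sqrt (4 * tau%:R + 1) / (2 * Num.sqrt (D + 4 * G ^+ 2 * (tau%:R + 1))))
       (1 / (Num.sqrt 2 * L))
     /\ eta t = Num.min
       (r / (2 * Num.sqrt ((4 * tau%:R + 1) * (D + 4 * G ^+ 2 * (3 * tau%:R + 1)))))
       (1 / (Num.sqrt 2 * L * (4 * tau%:R + 1)))) ->
  let VT := \sum_(1 <= t < T.+1) enorm (V t (x t) - Vt t (x t)) ^+ 2 in
  \sum_(1 <= t < T.+1) (f t (xh t) - f t p)
    <= Num.max (Num.sqrt 2 * r ^+ 2 * L * (4 * tau%:R + 1))
               (2 * r * Num.sqrt ((4 * tau%:R + 1) * (VT + 4 * G ^+ 2 * (3 * tau%:R + 1)))).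
Proof.
move=> hS1 hmono hsig1 hinj hcons hdel hRb hconv L0 hLip hG hhint hp hx hxh hstep.
cbv zeta; set VT := \sum_(1 <= t < T.+1) enorm _ ^+ 2.
set B := Num.max _ _.
have r0 : 0 <= r by apply: le_trans hp; exact: enorm_ge0.
have B0 : 0 <= B.
  rewrite le_max; apply/orP; right; rewrite mulr_ge0 ?sqrtr_ge0 // mulr_ge0 //.
set g := fun t => V t (xh t).
have lin : \sum_(1 <= t < T.+1) (f t (xh t) - f t p) <= \sum_(1 <= t < T.+1) dotv (g t) (xh t - p).
  apply: ler_sum_nat => t ht; have [cf gf] := hconv t ht; exact: conv_grad.
apply: le_trans lin _.
case: (posnP T) => [T0|Tp]; first by rewrite T0 big_geq.
have G0 : 0 <= G by apply: le_trans (enorm_ge0 _) (hG 1%N _ x1).1; lia.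
case: (eqVneq G 0) => [G00|Gn0].
  rewrite big_nat big1 // => t ht; apply: N2_eq0.
  by have := N2_le (hG t ht (xh t)).1; rewrite G00 expr0n.
have Gp : 0 < G by rewrite lt_def Gn0 G0.
set U := index_iota 1 T.+1.
have uU : uniq U by apply: iota_uniq.
have memU : forall t, (t \in U) = (1 <= t <= T)%N by move=> t; rewrite mem_index_iota ltnS.
set a := fun t => enorm (V t (x t) - Vt t (x t)) ^+ 2.
have a0 : forall t, 0 <= a t by move=> t; exact: sqr_ge0.
have a4 : forall t, (1 <= t <= T)%N -> a t <= 4 * G ^+ 2.
  move=> t ht; rewrite /a enorm_sq.
  have := N2D_le (V t (x t)) (- Vt t (x t)); rewrite dotvNl dotvNr opprK.
  have [h1 h2] := hG t ht (x t); have := N2_le h1; have := N2_le h2; lra.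
set Dt := fun t => \sum_(1 <= s < t | S (act t) t s) a s.
have Dt0 : forall t, 0 <= Dt t by move=> t; apply: sumr_ge0 => s _.
set et := fun t => etaf r L G tau (Dt t).
set gm := fun t => gamf r L G tau (Dt t).
have hst : forall t, (1 <= t <= T)%N -> gamma t = gm t /\ eta t = et t.
  by move=> t ht; exact: (hstep t ht).
have et0 : forall t, 0 <= et t by move=> t; exact: eta_ge0.
have gm0 : forall t, 0 <= gm t by move=> t; exact: gam_ge0.
have c0 : 0 < cc R tau by exact: cc_gt0.
have hSsub : forall t s u, (1 <= t <= T)%N -> S (act t) t s -> S (act s) s u -> S (act t) t u.
  move=> t s u ht hs hu.
  have hsr := hS1 _ _ ht s hs.
  have hsT : (1 <= s <= T)%N by clear -hsr ht; lia.
  have [k [j [k1 [kj [jT [ek ej]]]]]] := hRb (act t) s hsT u hu.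
  have [m [mT hm]] := hcons (act t) t ht.
  have [k' [hk' ek']] := (hm s).1 hs.
  have jk' : j = k' by apply: (hinj (act t)); [clear -k1 kj jT; lia|clear -hk' mT; lia|rewrite ej ek'].
  apply/(hm u).2; exists k; split => //; clear -k1 kj jk' hk'; lia.
pose P := fun k => \sum_(1 <= s < k) a s.
have P_S : forall k, P k.+1 = P k + (if (0 < k)%N then a k else 0).
  move=> k; rewrite /P; case: (posnP k) => [->|kp]; first by rewrite !big_geq // addr0.
  by rewrite big_nat_recr //= kp.
have P0 : forall k, 0 <= P k by move=> k; apply: sumr_ge0.
have P_inc : forall d k, (k + d <= T.+1)%N -> P k <= P (k + d)%N <= P k + 4 * G ^+ 2 * d%:R.
  elim=> [|d IH] k hk; first by rewrite addn0 mulr0 addr0 lexx.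
  have hk' : (k + d <= T.+1)%N by clear -hk; lia.
  have [h1 h2] := andP (IH k hk').
  have hi : 0 <= (if (0 < k + d)%N then a (k + d)%N else 0) <= 4 * G ^+ 2.
    case: ifP => h; last by rewrite lexx /= mulr_ge0 // sqr_ge0.
    rewrite a0 a4 //; clear -h hk; lia.
  move/andP: hi => [hi1 hi2].
  rewrite addnS P_S -natr1; apply/andP; split; clear -h1 h2 hi1 hi2; lra.
have Pmono : forall k1 k2, (k1 <= k2 <= T.+1)%N -> P k1 <= P k2.
  move=> k1 k2 hk; have := P_inc (k2 - k1)%N k1; rewrite subnKC; last by clear -hk; lia.
  by move=> /(_ (ltac:(clear -hk; lia))) /andP[].
have Pinc2 : forall k1 k2, (k1 <= k2 <= T.+1)%N -> P k2 <= P k1 + 4 * G ^+ 2 * (k2 - k1)%:R.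
  move=> k1 k2 hk; have := P_inc (k2 - k1)%N k1; rewrite subnKC; last by clear -hk; lia.
  by move=> /(_ (ltac:(clear -hk; lia))) /andP[].
have Dt_hi : forall t, Dt t <= P t.
  by move=> t; apply: (sum_sub_nat (Q := xpredT)).
have Dt_lo : forall t, (1 <= t <= T)%N -> P (t - tau)%N <= Dt t.
  move=> t ht; rewrite /P (big_nat_widen _ _ _ _ _ (leq_subr tau t)) /Dt.
  apply: sum_sub_nat => // s hs /= hst'; apply: hdel => //; clear -hs hst'; lia.
have Dt_mono : forall t s, (1 <= t <= T)%N -> S (act t) t s -> Dt s <= Dt t.
  move=> t s ht hs; have hsr := hS1 _ _ ht s hs.
  rewrite /Dt (big_nat_widen _ _ _ _ _ (ltnW (proj2 (andP hsr)) : (s <= t)%N)).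
  apply: sum_sub_nat; last exact: a0.
  move=> u hu /andP[hu1 hu2]; exact: hSsub hs hu1.
have et_anti' : forall t s, (1 <= t <= T)%N -> S (act t) t s -> et t <= et s.
  by move=> t s ht hs; exact: (eta_anti L tau r0 Gp (Dt0 s) (Dt_mono t s ht hs)).
pose pr := prec et.
have F5 : forall t s, (1 <= t <= T)%N -> S (act t) t s -> pr s t.
  move=> t s ht hs; have hsr := hS1 _ _ ht s hs.
  move: (et_anti' t s ht hs); rewrite le_eqVlt => /orP[/eqP e|lt].
    by rewrite /pr /prec e ltxx eqxx /=; clear -hsr; lia.
  by rewrite /pr /prec lt.
have F6 : forall t u, (1 <= t <= T)%N -> (1 <= u <= T)%N -> pr u t -> ~~ S (act t) t u ->
    (u != t) && (u <= t + tau)%N && (t <= u + tau)%N.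
  move=> t u ht hu pu nS.
  have ut : u != t by apply/eqP => e; rewrite e /pr prec_irr in pu.
  rewrite ut /=; apply/andP; split.
    rewrite leqNgt; apply/negP => lt.
    have := F5 u t hu (hdel u hu t (proj1 (andP ht)) lt).
    by rewrite /pr (prec_asym pu).
  rewrite leqNgt; apply/negP => lt.
  by rewrite (hdel t ht u (proj1 (andP hu)) lt) in nS.
have G2 : 0 <= G ^+ 2 by exact: sqr_ge0.
have Dclose : forall t u, (1 <= t <= T)%N -> (1 <= u <= T)%N -> (u <= t + tau)%N -> (t <= u + tau)%N ->
    Dt u + C1 G tau <= Dt t + C3 G tau.
  move=> t u ht hu h1 h2.
  have e1 := Dt_hi u; have e2 := Pinc2 (t - tau)%N u (ltac:(clear -ht hu h1 h2; lia)); have e3 := Dt_lo t ht.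
  have e4 : ((u - (t - tau))%:R : R) <= 2 * tau%:R by rewrite -natrM ler_nat; clear -ht hu h1 h2; lia.
  have e5 : 4 * G ^+ 2 * (u - (t - tau))%:R <= 4 * G ^+ 2 * (2 * tau%:R) by rewrite ler_wpM2l // mulr_ge0.
  rewrite /C1 /C3; clear -e1 e2 e3 e5; lra.
have Abound : forall t, (1 <= t <= T)%N -> P t.+1 <= Dt t + C1 G tau.
  move=> t ht.
  have e2 := Pinc2 (t - tau)%N t.+1 (ltac:(clear -ht; lia)); have e3 := Dt_lo t ht.
  have e4 : ((t.+1 - (t - tau))%:R : R) <= tau%:R + 1 by rewrite natr1 ler_nat; clear -ht; lia.
  have e5 : 4 * G ^+ 2 * (t.+1 - (t - tau))%:R <= 4 * G ^+ 2 * (tau%:R + 1) by rewrite ler_wpM2l // mulr_ge0.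
  rewrite /C1; clear -e2 e3 e5; lra.
have DtVT : forall t, (1 <= t <= T)%N -> Dt t <= VT.
  move=> t ht; apply: le_trans (Dt_hi t) _; exact: (Pmono t T.+1 (ltac:(clear -ht; lia))).
pose gt := fun t => Vt t (x t).
pose q := x1 - p.
pose W := fun t => WA et g U predT t.
pose Nb := fun t u => (t \in U) && (u \in U) && pr u t && ~~ S (act t) t u.
pose M := fun t => \sum_(u <- U | Nb t u) g u.
have decomp : forall t, (1 <= t <= T)%N ->
    \sum_(1 <= s < t | S (act t) t s) g s = W t - M t.
  move=> t ht.
  suff -> : W t = \sum_(1 <= s < t | S (act t) t s) g s + M t by rewrite addrK.
  rewrite /W /WA (bigID (fun u => S (act t) t u)) /=.
  congr (_ + _).
    rewrite (sum_restrict (T:=T) (P := fun s => S (act t) t s)); last 2 first.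
    - by move=> u hu; exact: hS1 ht u hu.
    - by clear -ht; lia.
    apply: eq_bigl => u; case Su: (S (act t) t u); last by rewrite andbF.
    by have := F5 t u ht Su; rewrite /pr => ->.
  rewrite /M big_seq_cond [RHS]big_seq_cond; apply: eq_bigl => u; rewrite /Nb.
  case uU': (u \in U) => //=; by rewrite (memU t) ht.
have xE : forall t, (1 <= t <= T)%N -> x t = x1 - et t *: (W t - M t).
  by move=> t ht; rewrite hx // (hst t ht).2 -decomp.
have xhE : forall t, (1 <= t <= T)%N -> xh t = x t - gm t *: gt t.
  by move=> t ht; rewrite hxh // (hst t ht).1.
have Zid : forall t, (1 <= t <= T)%N -> dotv (g t) (xh t - p) =
    dotv (g t) q - et t / 2 * (dotv (W t + g t) (W t + g t) - dotv (W t) (W t)) +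
    (et t * dotv (g t) (g t) / 2 + et t * dotv (g t) (M t) - gm t * dotv (g t) (gt t)).
  move=> t ht; rewrite xhE // xE // /q N2D (dotvC (W t) (g t)).
  rewrite !dotvBr !dotvZr !dotvBr; by field.
have E2 : forall t, (1 <= t <= T)%N ->
    - (gm t * dotv (g t) (gt t)) <= gm t * a t - gm t * dotv (g t) (g t) / 2.
  move=> t ht.
  have hl := hLip t ht (xh t) (x t).
  have e1 : xh t - x t = - (gm t *: gt t) by rewrite xhE // addrAC subrr add0r.
  rewrite e1 in hl.
  have n1 : dotv (g t - V t (x t)) (g t - V t (x t)) <= L ^+ 2 * (gm t ^+ 2 * dotv (gt t) (gt t)).
    have h1 := enorm_ge0 (V t (xh t) - V t (x t)).
    have h2 := enorm_ge0 (- (gm t *: gt t)).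
    have e3 : dotv (g t - V t (x t)) (g t - V t (x t)) = enorm (V t (xh t) - V t (x t)) ^+ 2 by rewrite enorm_sq.
    have e4 : gm t ^+ 2 * dotv (gt t) (gt t) = enorm (- (gm t *: gt t)) ^+ 2 by rewrite enorm_sq dotvNl dotvNr opprK N2Z.
    rewrite e3 e4 -exprMn; have := ltW L0; clear -hl h1 h2; nra.
  have e2 : g t - gt t = (V t (x t) - gt t) + (g t - V t (x t)) by rewrite [RHS]addrC addrA subrK.
  have n2 := N2D_le (V t (x t) - gt t) (g t - V t (x t)); rewrite -e2 in n2.
  have ea : dotv (V t (x t) - gt t) (V t (x t) - gt t) = a t by rewrite /a enorm_sq.
  rewrite ea in n2.
  have gl : 2 * L ^+ 2 * gm t ^+ 2 <= 1 := gam_leL G tau r0 L0 (Dt0 t).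
  have nb := N2B (g t) (gt t).
  have k0 := N2_ge0 (gt t).
  have k1 : 2 * (L ^+ 2 * (gm t ^+ 2 * dotv (gt t) (gt t))) <= dotv (gt t) (gt t).
    have -> : 2 * (L ^+ 2 * (gm t ^+ 2 * dotv (gt t) (gt t))) = (2 * L ^+ 2 * gm t ^+ 2) * dotv (gt t) (gt t) by ring.
    by rewrite -[leRHS]mul1r ler_wpM2r.
  have d1 : dotv (g t) (g t) - 2 * a t <= 2 * dotv (g t) (gt t) by clear -n1 n2 nb k1; lra.
  have := gm0 t; clear -d1; nra.
pose z := fun t => gm t / cc R tau.
have hN : forall t u, Nb t u -> (u != t) && (u <= t + tau)%N && (t <= u + tau)%N.
  move=> t u /andP[/andP[/andP[tU uU'] ptu] nS].
  by apply: F6 => //; rewrite -memU.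
have hez : forall t u, Nb t u -> et t <= z u.
  move=> t u hb; have := hN t u hb; move: hb => /andP[/andP[/andP[tU uU'] _] _].
  move=> /andP[/andP[_ h1] h2].
  rewrite /z ler_pdivlMr // mulrC; apply: eta_le_gam => //.
  by apply: Dclose; rewrite -?memU.
have z0 : forall t, 0 <= z t by move=> t; rewrite /z divr_ge0 // ltW.
have cb := cross_bound g uU hN hez et0 z0.
pose lam := etaf r L G tau VT.
have lamle : forall t, t \in U -> predT t -> lam <= et t.
  move=> t tU _; rewrite memU in tU; exact (eta_anti L tau r0 Gp (Dt0 t) (DtVT t tU)).
have ab := abel g uU (leqnn (count predT U)) lamle.
pose H := \sum_(t <- U) g t.
have ab' : lam * dotv H H <= \sum_(t <- U) et t * (dotv (W t + g t) (W t + g t) - dotv (W t) (W t)) := ab.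
have -> : \sum_(t <- U) dotv (g t) (xh t - p) = dotv H q -
    \sum_(t <- U) et t / 2 * (dotv (W t + g t) (W t + g t) - dotv (W t) (W t)) +
    \sum_(t <- U) (et t * dotv (g t) (g t) / 2 + et t * dotv (g t) (M t) - gm t * dotv (g t) (gt t)).
  rewrite /H dotv_suml -sumrB -big_split /= big_seq [RHS]big_seq; apply: eq_bigr => t tU.
  by apply: Zid; rewrite -memU.
have AB2 : lam / 2 * dotv H H <=
    \sum_(t <- U) et t / 2 * (dotv (W t + g t) (W t + g t) - dotv (W t) (W t)).
  have -> : \sum_(t <- U) et t / 2 * (dotv (W t + g t) (W t + g t) - dotv (W t) (W t)) =
      (\sum_(t <- U) et t * (dotv (W t + g t) (W t + g t) - dotv (W t) (W t))) / 2.
    by rewrite mulr_suml; apply: eq_bigr => t _; rewrite mulrAC.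
  have -> : lam / 2 * dotv H H = lam * dotv H H / 2 by rewrite mulrAC.
  by rewrite ler_pM2r.
have EE : \sum_(t <- U) (et t * dotv (g t) (g t) / 2 + et t * dotv (g t) (M t) - gm t * dotv (g t) (gt t))
    <= \sum_(t <- U) gm t * a t.
  apply: le_trans (_ : _ <= \sum_(t <- U) (et t * dotv (g t) (M t) +
      (et t * dotv (g t) (g t) / 2 + (gm t * a t - gm t * dotv (g t) (g t) / 2)))) _.
    rewrite big_seq [leRHS]big_seq; apply: ler_sum => t tU.
    have := E2 t (ltac:(by rewrite -memU)); clear; lra.
  rewrite big_split /=; apply: le_trans (lerD cb (lexx _)) _.
  rewrite -big_split /=; apply: ler_sum => t _.
  have ez : et t <= z t.
    rewrite /z ler_pdivlMr // mulrC; apply: eta_le_gam => //.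
    rewrite lerD2l /C1 /C3 ler_wpM2l ?mulr_ge0 // lerD2r.
    by rewrite ler_peMl // ?ler0n // ler1n.
  have gz : gm t = cc R tau * z t by rewrite /z mulrC divfK // lt0r_neq0.
  have hn := N2_ge0 (g t); have ht0 := ler0n R tau.
  have h1 : 0 <= (z t - et t) * dotv (g t) (g t) by apply: mulr_ge0 => //; rewrite subr_ge0.
  rewrite gz /cc; clear -h1 hn ht0; nra.
have VT0 : 0 <= VT := P0 T.+1.
have FF : \sum_(t <- U) gm t * a t <= r * Num.sqrt (cc R tau) * Num.sqrt VT.
  apply: le_trans (_ : _ <= \sum_(t <- U) (r * Num.sqrt (cc R tau) / 2) * (a t / Num.sqrt (P t.+1))) _.
    rewrite big_seq [leRHS]big_seq; apply: ler_sum => t tU; rewrite memU in tU.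
    case: (eqVneq (a t) 0) => [->|an]; first by rewrite !(mulr0, mul0r).
    have ap : 0 < a t by rewrite lt_def an a0.
    have t0 : (0 < t)%N by clear -tU; lia.
    have Ap : 0 < P t.+1 by rewrite P_S t0; have := P0 t; clear -ap; lra.
    have hg := gam_le_A L r0 Ap (Abound t tU).
    apply: le_trans (ler_wpM2r (a0 t) hg) _.
    rewrite le_eqVlt; apply/orP; left; apply/eqP; field.
    by rewrite lt0r_neq0 // sqrtr_gt0.
  rewrite -mulr_sumr.
  have ad : \sum_(t <- U) a t / Num.sqrt (P t.+1) <= 2 * Num.sqrt VT := adagrad a0 T.
  apply: le_trans (ler_wpM2l _ ad) _.
    by rewrite divr_ge0 // mulr_ge0 // sqrtr_ge0.
  by rewrite le_eqVlt; apply/orP; left; apply/eqP; field.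
have C30 := C3_gt0 tau Gp.
have sq : Num.sqrt (cc R tau) * Num.sqrt VT <= Num.sqrt (cc R tau * (VT + C3 G tau)).
  rewrite -sqrtrM; last exact: ltW c0.
  rewrite ler_sqrt; last by apply: mulr_ge0; [exact: ltW c0 | clear -VT0 C30; lra].
  by rewrite ler_wpM2l ?(ltW c0) //; clear -C30; lra.
have BB : 2 * r * Num.sqrt (cc R tau * (VT + C3 G tau)) <= B by rewrite le_max lexx orbT.
have hq : dotv q q <= r ^+ 2.
  by have := N2_le hp; rewrite -[p - x1]opprB dotvNl dotvNr opprK.
have lam0 : 0 <= lam by exact: eta_ge0.
have QQ : dotv H q - lam / 2 * dotv H H <= B / 2.
  have HH := N2_ge0 H.
  case: (eqVneq r 0) => [r00|rn0].
    have : dotv q H = 0 by apply: N2_eq0; rewrite r00 expr0n in hq.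
    rewrite dotvC => ->; have : 0 <= lam / 2 * dotv H H by rewrite mulr_ge0 // divr_ge0.
    clear -B0; lra.
  have rp : 0 < r by rewrite lt_def rn0 r0.
  have [lp lB] := final_bound tau L0 Gp VT0 rp.
  have lB' : r ^+ 2 <= lam * B := lB.
  have am := amgm_l q H lp; rewrite dotvC in am.
  have : dotv q q / (2 * lam) <= B / 2.
    rewrite ler_pdivrMr ?mulr_gt0 //.
    have -> : B / 2 * (2 * lam) = lam * B by field.
    clear -hq lB'; lra.
  rewrite -/lam in am; clear -am; lra.
have := ler_wpM2l r0 sq.
clear -QQ AB2 EE FF BB; lra.
Qed.
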